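(* Let $p$ be a prime, $d\in\mathbb{N}_{+}$, $V$ a subspace of $\mathbb{F}_{p}^{d}$, and $V_{1},\dots,V_{N}$ linearly independent subspaces of $\mathbb{F}_{p}^{d}$. If $N\geq\dim(V)+2$, then $\bigcap_{i=1}^{N}(V+V_{i})=V$.
   Context: Subspaces $V_{1},\dots,V_{N}$ are linearly independent if whenever $v_{i}\in V_{i}$ and $\sum_{i}v_{i}=\mathbf0$, all $v_{i}=\mathbf0$. *)

(* Defs.v *)
From HB Require Import structures.
From mathcomp Require Import all_boot all_order all_algebra.
Set Implicit Arguments. Unset Strict Implicit. Unset Printing Implicit Defensive.
Import GRing.Theory.
Local Open Scope ring_scope.

Definition lin_indep_subspaces (K : fieldType) (vT : vectType K) (N : nat)
  (Vs : 'I_N -> {vspace vT}) : Prop :=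
  forall v : 'I_N -> vT, (forall i, v i \in Vs i) ->
    \sum_(i < N) v i = 0 -> forall i, v i = 0.

(* Main.v *)
Require Import Defs.
From HB Require Import structures.
From mathcomp Require Import all_boot all_order all_algebra.
From Stdlib Require Import Classical.
From mathcomp Require Import zify.
Local Open Scope ring_scope.
Import GRing.Theory.

Theorem proposition3p3 (p d N : nat) (hp : prime p) (hd : (0 < d)%N)
  (V : {vspace 'rV['F_p]_d}) (Vs : 'I_N -> {vspace 'rV['F_p]_d}) :
  lin_indep_subspaces Vs ->
  (\dim V + 2 <= N)%N ->
  (\bigcap_(i < N) (V + Vs i))%VS = V.
Proof.
move=> Hind HN.
apply/eqP; rewrite eqEsubv; apply/andP; split; last first.
  by apply/subv_bigcapP => i _; exact: addvSl.
apply/subvP => x Hx.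
have Hi : forall i, x \in (V + Vs i)%VS.
  move=> i; exact: (subvP (bigcapv_inf i (erefl true) (subvv (V + Vs i)%VS)) x Hx).
have ex : forall i, exists w, (w \in Vs i) && (x - w \in V).
  move=> i; case/memv_addP: (Hi i) => y Hy [z Hz ->].
  by exists z; rewrite Hz /= addrK.
pose w i := xchoose (ex i).
have Hw : forall i, (w i \in Vs i) && (x - w i \in V) by move=> i; exact: (xchooseP (ex i)).
pose W := (V + <[x]>)%VS.
have HwW : forall i, w i \in W.
  move=> i; have /andP[_ H2] := Hw i.
  have -> : w i = x - (x - w i) by rewrite opprB addrC subrK.
  apply: memvB.
    by apply: (subvP (addvSr V <[x]>%VS)); exact: memv_line.
  by apply: (subvP (addvSl V <[x]>%VS)).
pose X := [tuple w i | i < N].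
have nfree : ~~ free X.
  apply/negP => /eqP Hf.
  have : (\dim <<X>> <= \dim W)%N.
    apply: dimvS; apply/span_subvP => v /mapP [i _ ->]; exact: HwW.
  rewrite Hf size_tuple.
  have : (\dim W <= \dim V + \dim <[x]>)%N by rewrite (dimv_add_leqif V <[x]>%VS).
  have : (\dim <[x]> <= 1)%N by rewrite dim_vline leq_b1.
  lia.
have : ~ (forall k, \sum_(i < N) k i *: X`_i = 0 -> (forall i, k i = 0)).
  by move=> H; move/negP: nfree; apply; apply/freeP.
move/not_all_ex_not => [k Hk].
move: (imply_to_and _ _ Hk) => [Hsum Hk2].
move: (not_all_ex_not _ _ Hk2) => [i Hki].
have HX : forall j : 'I_N, X`_j = w j.
  by move=> j; rewrite -tnth_nth tnth_mktuple.
have Hs : \sum_(j < N) k j *: w j = 0.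
  rewrite -[RHS]Hsum; apply: eq_bigr => j _; by rewrite HX.
have := Hind (fun j => k j *: w j) _ Hs i.
move=> /(_ _) H.
have Hz : k i *: w i = 0.
  apply: H => j; apply: memvZ; by case/andP: (Hw j).
move/eqP: Hz; rewrite scaler_eq0 => /orP [/eqP Hk0 | /eqP Hwi]; first by case: Hki.
by case/andP: (Hw i) => _; rewrite Hwi subr0.
Qed.
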